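(* Let $(\Omega,\mathcal F,\mathbb P)$ be a probability space with a measurable action $\{\theta_x\}_{x\in\mathbb R^{2d}}$ under which $\mathbb P$ is invariant, and let $v(x,\omega)=\hat v(\theta_x\omega)$ be a stationary process with $\hat v$ measurable and $\mathbb E|\hat v|<\infty$. For $\ell=(\ell_1,\dots,\ell_{2d})$ with $\ell_i>0$ put $I(\ell)=\prod_{i=1}^{2d}[-\ell_i,\ell_i]$. Then for $\mathbb P$-almost every $\omega$ there is a sequence $\ell^r=(\ell^r_1,\dots,\ell^r_{2d})$ with $\ell^r_i\to\infty$ as $r\to\infty$ for each $i$, such that $$\sup_r\ \sigma(\partial I(\ell^r))^{-1}\int_{\partial I(\ell^r)}|v(x,\omega)|\,\sigma(dx)<\infty,$$ where $\sigma$ is the $(2d-1)$-dimensional surface measure. *)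

(* Defs.v *)
From HB Require Import structures.
From mathcomp Require Import all_boot all_order all_algebra.
From mathcomp Require Import all_classical all_reals all_analysis.

Set Implicit Arguments.
Unset Strict Implicit.
Unset Printing Implicit Defensive.

Import Order.TTheory GRing.Theory Num.Theory.
Local Open Scope classical_set_scope.
Local Open Scope ring_scope.

(* Points of R^n are n-tuples of reals; n.-tuple R carries the product
   (= Borel) sigma-algebra from measurable_structure.v. *)

Definition tzero (R : realType) (n : nat) : n.-tuple R := [tuple (0 : R) | i < n].
Definition tadd (R : realType) (n : nat) (x y : n.-tuple R) : n.-tuple R :=
  [tuple tnth x i + tnth y i | i < n].

Fixpoint iter_box_int (R : realType) (n : nat) (l : 'I_n -> R) (js : seq 'I_n)
    (x : 'I_n -> R) (g : ('I_n -> R) -> \bar R) : \bar R :=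
  match js with
  | [::] => g x
  | j :: js' =>
      (\int[@lebesgue_measure R]_(t in `[(- l j)%R, (l j)%R]%classic)
         iter_box_int l js' (fun k => if k == j then t else x k) g)%E
  end.

(* Integral over the face {x_i = s} of the box I(l) = prod_i [-l_i, l_i],
   w.r.t. (n-1)-dimensional Lebesgue (surface) measure on that face. *)
Definition face_int (R : realType) (n : nat) (l : 'I_n -> R) (i : 'I_n) (s : R)
    (g : ('I_n -> R) -> \bar R) : \bar R :=
  iter_box_int l [seq j <- enum 'I_n | j != i] (fun k => if k == i then s else 0) g.

Definition boundary_int (R : realType) (n : nat) (l : 'I_n -> R)
    (g : ('I_n -> R) -> \bar R) : \bar R :=
  (\sum_(i < n) (face_int l i (l i) g + face_int l i (- l i) g))%E.

Definition boundary_area (R : realType) (n : nat) (l : 'I_n -> R) : R :=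
  \sum_(i < n) 2 * \prod_(j < n | j != i) (2 * l j).

Definition boundary_avg (R : realType) (n : nat) (dO : measure_display)
    (Omega : measurableType dO) (theta : n.-tuple R -> Omega -> Omega)
    (vhat : Omega -> R) (l : 'I_n -> R) (omega : Omega) : \bar R :=
  ((boundary_area l)^-1%:E *
   boundary_int l (fun x => (`| vhat (theta [tuple x i | i < n] omega) |)%:E))%E.

(* Main.v *)
Require Import Defs.
From HB Require Import structures.
From mathcomp Require Import all_boot all_order all_algebra.
From mathcomp Require Import all_classical all_reals all_analysis.
From mathcomp Require Import measurable_realfun.
From mathcomp Require Import ring lra.

Import Order.TTheory GRing.Theory Num.Theory.
Local Open Scope classical_set_scope.
Local Open Scope ring_scope.

Lemma iter_ge0 (R : realType) n (l : 'I_n -> R) js x g :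
  (forall y, (0 <= g y)%E) -> (0 <= iter_box_int l js x g)%E.
Proof.
move=> g0; elim: js x => [|j js IH] x /=; first exact: g0.
by apply: integral_ge0 => t _; exact: IH.
Qed.

Lemma patch_meas (R : realType) dT (T : measurableType dT) (D : set R) (mD : measurable D)
  (F : (T * R)%type -> \bar R) : measurable_fun setT F ->
  measurable_fun setT (fun z : (T * R)%type => ((fun t => F (z.1, t)) \_ D) z.2).
Proof.
move=> mF.
have -> : (fun z : (T * R)%type => ((fun t => F (z.1, t)) \_ D) z.2) =
   (fun z => F z * (\1_D z.2 : R)%:E)%E.
  apply/funext => -[x t] /=; rewrite /patch indicE.
  by case: ifP => _; rewrite ?mule1 ?mule0.
apply: emeasurable_funM => //.
apply/measurable_EFinP; apply: measurableT_comp => //.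
Qed.


Lemma iter_meas (R : realType) n (l : 'I_n -> R) dO (Omega : measurableType dO)
  (G : Omega -> ('I_n -> R) -> \bar R)
  (HG : forall dT (T : measurableType dT) (a : T -> Omega) (u : T -> 'I_n -> R),
     measurable_fun setT a -> (forall k, measurable_fun setT (fun t => u t k)) ->
     measurable_fun setT (fun t => G (a t) (u t)))
  (G0 : forall w y, (0 <= G w y)%E) js :
  forall dT (T : measurableType dT) (a : T -> Omega) (u : T -> 'I_n -> R),
     measurable_fun setT a -> (forall k, measurable_fun setT (fun t => u t k)) ->
     measurable_fun setT (fun t => iter_box_int l js (u t) (G (a t))).
Proof.
elim: js => [|j js IH] dT T a u ma mu /=; first exact: HG.
pose F := fun z : (T * R)%type =>
  iter_box_int l js (fun k => if k == j then z.2 else u z.1 k) (G (a z.1)).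
have mF : measurable_fun setT F.
  apply: (IH _ _ (a \o fst) (fun z : (T * R)%type => fun k => if k == j then z.2 else u z.1 k)).
    exact: measurableT_comp.
  move=> k /=; case: (k == j); first exact: measurable_snd.
  exact: (measurableT_comp (mu k) measurable_fst).
have := measurable_fun_fubini_tonelli_F (m2 := @lebesgue_measure R)
   (fun z : (T * R)%type => ((fun t => F (z.1, t)) \_ `[(- l j)%R, (l j)%R]) z.2).
move=> /(_ (@patch_meas R dT T _ (measurable_itv _) F mF)).

have h0 : forall x : (T * R)%type,
   (0 <= ((fun t => F (x.1, t)) \_ `[(- l j)%R, (l j)%R]) x.2)%E.
  by move=> x; rewrite /patch; case: ifP => _ //; exact: iter_ge0.
move/(_ h0); apply: eq_measurable_fun => t _.
rewrite integral_mkcond; reflexivity.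
Qed.

Lemma iter_exp (R : realType) n (l : 'I_n -> R) dO (Omega : measurableType dO)
  (P : probability Omega R)
  (G : Omega -> ('I_n -> R) -> \bar R)
  (HG : forall dT (T : measurableType dT) (a : T -> Omega) (u : T -> 'I_n -> R),
     measurable_fun setT a -> (forall k, measurable_fun setT (fun t => u t k)) ->
     measurable_fun setT (fun t => G (a t) (u t)))
  (G0 : forall w y, (0 <= G w y)%E) (c : \bar R)
  (HE : forall x, (\int[P]_w G w x = c)%E)
  (l0 : forall j, 0 <= l j) js :
  forall x, (\int[P]_w iter_box_int l js x (G w) = (\prod_(j <- js) (2 * l j))%:E * c)%E.
Proof.
elim: js => [|j js IH] x /=; first by rewrite big_nil mul1e.
pose F := fun z : (Omega * R)%type =>
  iter_box_int l js (fun k => if k == j then z.2 else x k) (G z.1).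
have mF : measurable_fun setT F.
  apply: (@iter_meas R n l dO Omega G HG G0 js _ _ fst (fun z : (Omega * R)%type => fun k => if k == j then z.2 else x k)).
    exact: measurable_fst.
  move=> k /=; case: (k == j); first exact: measurable_snd.
  exact: measurable_cst.
pose f := fun z : (Omega * R)%type => ((fun t => F (z.1, t)) \_ `[(- l j)%R, (l j)%R]) z.2.
have mf : measurable_fun setT f by exact: (@patch_meas R dO Omega _ (measurable_itv _) F mF).
have f0 : forall z, (0 <= f z)%E.
  by move=> z; rewrite /f /patch; case: ifP => _ //; exact: iter_ge0.
transitivity (\int[P]_w \int[@lebesgue_measure R]_t f (w, t))%E.
  by apply: eq_integral => w _; rewrite integral_mkcond.
rewrite (@fubini_tonelli _ _ _ _ _ P (@lebesgue_measure R) f mf f0).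
transitivity (\int[@lebesgue_measure R]_t
   (((fun _ => (\prod_(j0 <- js) (2 * l j0))%:E * c) \_ `[(- l j)%R, (l j)%R]) t))%E.
  apply: eq_integral => t _; rewrite /f /patch /=; case: ifP => _.
    by rewrite /F /=; exact: IH.
  by rewrite [X in (_ = X)%E](_ : _ = 0%E) // integral0.
rewrite -integral_mkcond integral_cst //.
have LJ : (@lebesgue_measure R `[(- l j)%R, l j]%classic = (2 * l j)%:E)%E.
  rewrite lebesgue_measure_itv /= lte_fin.
  case: ifP => h.
    by rewrite opprK -EFinD; congr EFin; lra.
  move/negbT: h; rewrite -leNgt => h.
  have := l0 j => h2.
  by congr EFin; lra.
transitivity ((\prod_(j0 <- js) (2 * l j0))%:E * c * (2 * l j)%:E)%E.
  by rewrite -LJ.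
rewrite big_cons EFinM muleAC; congr (_ * _)%E; exact: muleC.
Qed.


Lemma extract (R : realType) (u : nat -> \bar R) : limn_einf u \is a fin_num ->
  exists M : R, forall m, exists k, (m <= k)%N /\ (u k <= M%:E)%E.
Proof.
rewrite limn_einf_lim => fu.
have hl := cvg_lim (@ereal_hausdorff R) (@cvg_einfs_sup R u).
exists (fine (limn (einfs u)) + 1) => m.
have h1 : (einfs u m <= limn (einfs u))%E.
  by rewrite hl; apply: ereal_sup_ubound; exists m.
have h2 : (einfs u m < (fine (limn (einfs u)) + 1)%:E)%E.
  apply: (le_lt_trans h1); rewrite -{1}(fineK fu) lte_fin; lra.
have [y [k /= mk <-] yM] := ereal_inf_lt h2.
by exists k; split => //; exact: ltW.
Qed.

Lemma divergence (R : realType) (phi : nat -> nat) : (forall r, (r <= phi r)%N) ->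
  (fun r => ((phi r)%:R + 1 : R)) @ \oo --> +oo.
Proof.
move=> hphi; apply: (ger_cvgy _ (@cvgr_idn R)).
apply: nearW => r /=; have := hphi r; rewrite -(ler_nat R) => h; lra.
Qed.

Lemma bint_meas (R : realType) n (l : 'I_n -> R) dO (Omega : measurableType dO)
  (G : Omega -> ('I_n -> R) -> \bar R)
  (HG : forall dT (T : measurableType dT) (a : T -> Omega) (u : T -> 'I_n -> R),
     measurable_fun setT a -> (forall k, measurable_fun setT (fun t => u t k)) ->
     measurable_fun setT (fun t => G (a t) (u t)))
  (G0 : forall w y, (0 <= G w y)%E) :
  measurable_fun setT (fun w => boundary_int l (G w)).
Proof.
rewrite /boundary_int; apply: emeasurable_sum => i.
apply: emeasurable_funD; rewrite /face_int;
  apply: (@iter_meas R n l dO Omega G HG G0 _ _ _ id (fun _ => _)) => //.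
Qed.

Lemma bavg_exp (R : realType) n (l : 'I_n -> R) dO (Omega : measurableType dO)
  (P : probability Omega R)
  (G : Omega -> ('I_n -> R) -> \bar R)
  (HG : forall dT (T : measurableType dT) (a : T -> Omega) (u : T -> 'I_n -> R),
     measurable_fun setT a -> (forall k, measurable_fun setT (fun t => u t k)) ->
     measurable_fun setT (fun t => G (a t) (u t)))
  (G0 : forall w y, (0 <= G w y)%E) (c : R) (c0 : 0 <= c)
  (HE : forall x, (\int[P]_w G w x = c%:E)%E)
  (l0 : forall j, 0 <= l j) :
  (\int[P]_w ((boundary_area l)^-1%:E * boundary_int l (G w)) <= c%:E)%E.
Proof.
have a0 : 0 <= boundary_area l.
  rewrite /boundary_area; apply: sumr_ge0 => i _; apply: mulr_ge0 => //.
  by apply: prodr_ge0 => j _; apply: mulr_ge0 => //.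
rewrite ge0_integralZl_EFin //; last 3 first.
- move=> w _; rewrite /boundary_int; apply: sume_ge0 => i _.
  by apply: adde_ge0; exact: iter_ge0.
- exact: (@bint_meas R n l dO Omega G HG G0).
- by rewrite invr_ge0.
rewrite /boundary_int ge0_integral_sum //; last 2 first.
- move=> i; apply: emeasurable_funD; rewrite /face_int;
    apply: (@iter_meas R n l dO Omega G HG G0 _ _ _ id (fun _ => _)) => //.
- by move=> i w _; apply: adde_ge0; exact: iter_ge0.
have fm : forall i s, measurable_fun setT (fun w => face_int l i s (G w)).
  move=> i s; rewrite /face_int;
    apply: (@iter_meas R n l dO Omega G HG G0 _ _ _ id (fun _ => _)) => //.
rewrite (eq_bigr (fun i => ((2 * \prod_(j < n | j != i) (2 * l j)) * c)%:E)); last first.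
  move=> i _; rewrite ge0_integralD //; try (by move=> w _; exact: iter_ge0); try exact: fm.
  rewrite /face_int !(@iter_exp R n l dO Omega P G HG G0 c%:E HE l0).
  rewrite -!EFinM -EFinD; congr EFin; rewrite big_filter.
  have -> : \prod_(i0 <- enum 'I_n | i0 != i) (2 * l i0) = \prod_(j < n | j != i) (2 * l j).
    by rewrite big_enum_cond.
  ring.
rewrite sumEFin -EFinM lee_fin -mulr_suml -/(boundary_area l).
have [->|an0] := eqVneq (boundary_area l) 0; first by rewrite invr0 mul0r.
by rewrite mulrA mulVf // mul1r.
Qed.

Theorem proposition3p3 (R : realType) (d : nat) (dO : measure_display)
    (Omega : measurableType dO) (P : probability Omega R)
    (theta : (2 * d)%N.-tuple R -> Omega -> Omega)
    (theta_meas : measurable_fun setT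
       (fun p : ((2 * d)%N.-tuple R * Omega)%type => theta p.1 p.2))
    (theta0 : forall omega, theta (tzero R (2 * d)) omega = omega)
    (thetaD : forall x y omega, theta (tadd x y) omega = theta x (theta y omega))
    (P_inv : forall x (A : set Omega), measurable A ->
       P (theta x @^-1` A) = P A)
    (vhat : Omega -> R)
    (vhat_meas : measurable_fun setT vhat)
    (vhat_int : P.-integrable setT (EFin \o vhat)) :
  {ae P, forall omega : Omega,
    exists l : nat -> 'I_(2 * d) -> R,
      (forall r i, 0 < l r i) /\
      (forall i, (fun r => l r i) @ \oo --> +oo) /\
      exists M : R, forall r, (boundary_avg theta vhat (l r) omega <= M%:E)%E}.
Proof.
pose g := fun (w : Omega) (x : 'I_(2 * d) -> R) =>
  (`|vhat (theta [tuple x i | i < (2 * d)%N] w)|)%:E.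
have HG : forall dT (T : measurableType dT) (a : T -> Omega) (u : T -> 'I_(2 * d) -> R),
     measurable_fun setT a -> (forall k, measurable_fun setT (fun t => u t k)) ->
     measurable_fun setT (fun t => g (a t) (u t)).
  move=> dT T a u ma mu; apply/measurable_EFinP.
  apply: measurableT_comp; first exact: normr_measurable.
  apply: (measurableT_comp vhat_meas).
  have mt : measurable_fun setT (fun t => [tuple u t i | i < (2 * d)%N]).
    apply/measurable_fun_tnthP => i.
    apply: (@eq_measurable_fun _ _ _ _ setT (fun t => u t i)); last exact: mu i.
    by move=> t _ /=; rewrite tnth_mktuple.
  exact: (measurableT_comp theta_meas (measurable_fun_pair mt ma)).
have G0 : forall w y, (0 <= g w y)%E by move=> w y; rewrite lee_fin normr_ge0.
have mv : measurable_fun setT (fun w => (`|vhat w|)%:E).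
  apply/measurable_EFinP; apply: measurableT_comp => //; exact: normr_measurable.
pose c := (\int[P]_w (`|vhat w|)%:E)%E.
have c0 : (0 <= c)%E by apply: integral_ge0 => w _; rewrite lee_fin normr_ge0.
have cfin : c \is a fin_num.
  rewrite ge0_fin_numE //; move/integrableP: vhat_int => [_] h.
  suff -> : c = (\int[P]_x `|(EFin \o vhat) x|)%E by [].
  by apply: eq_integral => w _ /=.
pose c' := fine c.
have cE : c = c'%:E by rewrite fineK.
have c'0 : 0 <= c' by rewrite -lee_fin -cE.
have HE : forall x, (\int[P]_w g w x = c'%:E)%E.
  move=> x; rewrite -cE /c /g.
  pose phi := theta [tuple x i | i < (2 * d)%N].
  have mphi : measurable_fun setT phi.
    exact: (measurable_fun_pair2 [tuple x i | i < (2 * d)%N] theta_meas).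
  have := @ge0_integral_pushforward _ _ _ _ R phi mphi P setT _ measurableT mv (fun y _ => normr_ge0 (vhat y)).
  rewrite preimage_setT => <-.
  apply: (eq_measure_integral P) => A mA _.
  exact: (P_inv [tuple x i | i < (2 * d)%N] A mA).
pose L := fun (r : nat) (i : 'I_(2 * d)) => (r%:R + 1 : R).
have L0 : forall r i, 0 < L r i by move=> r i; rewrite /L; have := ler0n R r; lra.
pose A := fun r w => boundary_avg theta vhat (L r) w.
have mA : forall r, measurable_fun setT (A r).
  move=> r; apply: measurable_funeM.
  exact: (@bint_meas R (2 * d) (L r) dO Omega g HG G0).
have A0 : forall r w, (0 <= A r w)%E.
  move=> r w; apply: mule_ge0.
    rewrite lee_fin invr_ge0 /boundary_area; apply: sumr_ge0 => i _; apply: mulr_ge0 => //.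
    by apply: prodr_ge0 => j _; apply: mulr_ge0 => //; exact: ltW.
  rewrite /boundary_int; apply: sume_ge0 => i _.
  by apply: adde_ge0; exact: iter_ge0.
have EA : forall r, (\int[P]_w A r w <= c'%:E)%E.
  move=> r; exact: (@bavg_exp R (2 * d) (L r) dO Omega P g HG G0 c' c'0 HE (fun j => ltW (L0 r j))).
pose F := fun w => limn_einf (fun r => A r w).
have FE : F = fun w => limn (einfs (fun r => A r w)).
  by apply/funext => w; rewrite /F limn_einf_lim.
have F0 : forall w, (0 <= F w)%E.
  move=> w; rewrite FE; apply: lime_ge; first exact: is_cvg_einfs.
  apply: nearW => m; apply: le_ereal_inf_tmp => _ [k /= _ <-]; exact: A0.
have mF : measurable_fun setT F.
  rewrite FE; apply: (emeasurable_fun_cvg (fun m w => einfs (fun r => A r w) m)).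
    by move=> m; apply: measurable_fun_einfs.
  by move=> w _; exact: is_cvg_einfs.
have hfat := fatou P measurableT mA (fun r w _ => A0 r w).
have IF : (\int[P]_w F w <= c'%:E)%E.
  apply: (le_trans hfat); rewrite limn_einf_lim; apply: lime_le; first exact: is_cvg_einfs.
  apply: nearW => m; apply: (le_trans (ereal_inf_lbound _)); first by exists m => /=.
  exact: EA.
have Fint : P.-integrable setT F.
  apply/integrableP; split => //.
  under eq_integral do rewrite gee0_abs //.
  exact: (le_lt_trans IF (ltry _)).
apply: filterS (integrable_ae measurableT Fint) => w /(_ I) Ffin.
have [M hM] := @extract R (fun r => A r w) Ffin.
have [phi hphi] := choice hM.
exists (fun r => L (phi r)); split; first by move=> r i; exact: L0.
split; first by move=> i; apply: divergence => r; case: (hphi r).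
by exists M => r; case: (hphi r).
Qed.
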